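(* Let $n\ge2$, $\pi\in\mathrm{Eq}(\mathsf{D}_n)$, and let $\mathbf{u}\approx\mathbf{v}$ be an identity satisfied by $\mathbf{C}_n\{\mathsf{Id}(\pi)\}$. (i) If $\mathbf{u}$ is a $(2n-1)$-limited cube-free rigid word, then $\mathbf{v}$ is also a $(2n-1)$-limited cube-free rigid word. (ii) If $\mathbf{u}\in\mathsf{D}_n$, then $\mathbf{v}\in\mathsf{D}_n$ and $(\mathbf{u},\mathbf{v})\in\pi$.
   Context: All varieties are varieties of monoids (signature: associative binary operation and identity constant $1$). Words are elements of the free monoid $X^*$ over a countably infinite set $X$ of variables; identities are pairs of words, and variables may be substituted by $1$. $\mathbf{V}\Sigma$ is the subvariety of $\mathbf{V}$ defined by $\Sigma$. $\mathbf{O}$ is the variety defined by $xyt_1xt_2y \approx yxt_1xt_2y$, $xt_1xyt_2y \approx xt_1yxt_2y$, $xt_1yt_2xy \approx xt_1yt_2yx$. For $n\ge2$, $\mathbf{C}_n=\mathbf{O}\{x^4\approx x^3,\ x^3t\approx tx^3,\ x^{2n}t_1\cdots t_{2n}\approx t_1x\cdots t_{2n}x\}$. For $0\le j\le n-1$, $\mathbf{d}_j = x^{a_0}t_1x^{a_1}\cdots t_{n-1}x^{a_{n-1}}$ with $a_j=1$, $a_i=2$ for $i\ne j$; $\mathsf{D}_n=\{\mathbf{d}_0,\dots,\mathbf{d}_{n-1}\}$. $\mathrm{Eq}(\mathsf{W})$ is the lattice of equivalence relations on $\mathsf{W}$ and $\mathsf{Id}(\pi)=\{\mathbf{u}\approx\mathbf{v}:(\mathbf{u},\mathbf{v})\in\pi\}$.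 A rigid word is $x^{e_0}t_1x^{e_1}\cdots t_rx^{e_r}$ with $r\ge0$, $e_i\ge0$, $x,t_1,\ldots,t_r$ distinct variables; it is $k$-limited if $\sum e_i\le k$ and cube-free if all $e_i<3$. *)

(* Defs.v *)
From mathcomp Require Import all_boot.
Set Implicit Arguments. Unset Strict Implicit. Unset Printing Implicit Defensive.

Definition word := seq nat.
Definition identity := (word * word)%type.

Record monoid := Monoid {
  mcarrier :> Type;
  mop : mcarrier -> mcarrier -> mcarrier;
  mone : mcarrier;
  mopA : forall a b c, mop a (mop b c) = mop (mop a b) c;
  mop1l : forall a, mop mone a = a;
  mop1r : forall a, mop a mone = a
}.

Definition eval (M : monoid) (f : nat -> M) (w : word) : M :=
  foldr (fun x m => mop (f x) m) (mone M) w.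

Definition msat (M : monoid) (p : identity) : Prop :=
  forall f : nat -> M, eval f p.1 = eval f p.2.

Definition msat_all (M : monoid) (Sigma : identity -> Prop) : Prop :=
  forall p, Sigma p -> msat M p.

Definition variety_sat (Sigma : identity -> Prop) (p : identity) : Prop :=
  forall M : monoid, msat_all M Sigma -> msat M p.

(* Variable names: x = 0, y = 1, t1 = 2, t2 = 3 in the identities of O. *)
Definition O_ids : seq identity :=
  [:: ([:: 0; 1; 2; 0; 3; 1], [:: 1; 0; 2; 0; 3; 1]);   (* xyt1xt2y ~ yxt1xt2y *)
      ([:: 0; 2; 0; 1; 3; 1], [:: 0; 2; 1; 0; 3; 1]);   (* xt1xyt2y ~ xt1yxt2y *)
      ([:: 0; 2; 1; 3; 0; 1], [:: 0; 2; 1; 3; 1; 0])].  (* xt1yt2xy ~ xt1yt2yx *)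

(* Extra identities of C_n; x = 0, t = 1, t_i = i. *)
Definition Cn_extra_ids (n : nat) : seq identity :=
  [:: (nseq 4 0, nseq 3 0);                               (* x^4 ~ x^3 *)
      (rcons (nseq 3 0) 1, 1 :: nseq 3 0);                (* x^3 t ~ t x^3 *)
      (nseq (2 * n) 0 ++ iota 1 (2 * n),                  (* x^{2n} t1...t2n ~ *)
       flatten [seq [:: i; 0] | i <- iota 1 (2 * n)])].   (*   t1 x ... t2n x *)

(* d_j = x^{a_0} t_1 x^{a_1} ... t_{n-1} x^{a_{n-1}}, x = 0, t_i = i. *)
Definition dexp (j i : nat) : nat := if i == j then 1 else 2.
Definition d (n j : nat) : word :=
  nseq (dexp j 0) 0 ++ flatten [seq i :: nseq (dexp j i) 0 | i <- iota 1 (n - 1)].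

Definition in_Dn (n : nat) (w : word) : Prop := exists2 j, j < n & w = d n j.

Definition equiv_on_Dn (n : nat) (pi : word -> word -> Prop) : Prop :=
  [/\ forall u v, pi u v -> in_Dn n u /\ in_Dn n v,
      forall u, in_Dn n u -> pi u u,
      forall u v, pi u v -> pi v u &
      forall u v w, pi u v -> pi v w -> pi u w].

Definition Cn_pi_ids (n : nat) (pi : word -> word -> Prop) (p : identity) : Prop :=
  p \in O_ids \/ p \in Cn_extra_ids n \/ pi p.1 p.2.

(* Rigid word x^{e_0} t_1 x^{e_1} ... t_r x^{e_r}: ts = [t_1..t_r], es = [e_0..e_r]. *)
Definition rigid_of (x : nat) (ts es : seq nat) : word :=
  nseq (head 0 es) x ++ flatten [seq p.1 :: nseq p.2 x | p <- zip ts (behead es)].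

Definition limited_cubefree_rigid (k : nat) (w : word) : Prop :=
  exists x ts es,
    [/\ uniq (x :: ts), size es = (size ts).+1, w = rigid_of x ts es,
        sumn es <= k & all (fun e => e < 3) es].

(* Main.v *)
Require Import Defs.
From mathcomp Require Import all_boot zify.
From Stdlib Require Import ClassicalEpsilon ProofIrrelevance FunctionalExtensionality PropExtensionality.
Set Implicit Arguments. Unset Strict Implicit. Unset Printing Implicit Defensive.

Definition subst (s : nat -> word) (w : word) : word := flatten (map s w).

Section Synt.
Variable T : Type.
Variable F : word -> T.
Definition ctx (a : word) : word -> word -> T := fun y z => F (y ++ a ++ z).
Definition scar := {g : word -> word -> T | exists a, ctx a = g}.
Definition srep (g : scar) : word :=
  epsilon (inhabits [::]) (fun a => ctx a = proj1_sig g).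
Lemma srepP g : ctx (srep g) = proj1_sig g.
Proof.
rewrite /srep; apply: (epsilon_spec (inhabits [::]) (fun a => ctx a = proj1_sig g)).
exact: (proj2_sig g).
Qed.
Lemma ctx_congl a a' b : ctx a = ctx a' -> ctx (a ++ b) = ctx (a' ++ b).
Proof.
move=> H; apply: functional_extensionality => y; apply: functional_extensionality => z.
rewrite /ctx -!catA; exact: (f_equal (fun g => g y (b ++ z)) H).
Qed.
Lemma ctx_congr a b b' : ctx b = ctx b' -> ctx (a ++ b) = ctx (a ++ b').
Proof.
move=> H; apply: functional_extensionality => y; apply: functional_extensionality => z.
have := f_equal (fun g => g (y ++ a) z) H; rewrite /ctx /= -!catA; exact.
Qed.
Lemma scar_eq (g1 g2 : scar) : proj1_sig g1 = proj1_sig g2 -> g1 = g2.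
Proof.
case: g1 g2 => [g1 p1] [g2 p2] /= E; subst g2; f_equal; apply: proof_irrelevance.
Qed.
Definition smk a : scar := exist _ (ctx a) (ex_intro _ a erefl).
Definition smop (g1 g2 : scar) : scar := smk (srep g1 ++ srep g2).
Definition sone : scar := smk [::].
Lemma smkK a : ctx (srep (smk a)) = ctx a.
Proof. by rewrite srepP. Qed.
Lemma smopA a b c : smop a (smop b c) = smop (smop a b) c.
Proof.
apply: scar_eq; rewrite /= /smop.
rewrite (ctx_congr _ (smkK _)) (ctx_congl _ (smkK _)) catA //.
Qed.
Lemma smop1l a : smop sone a = a.
Proof.
apply: scar_eq; rewrite /= (ctx_congl _ (smkK _)) /= srepP //.
Qed.
Lemma smop1r a : smop a sone = a.
Proof.
apply: scar_eq; rewrite /= (ctx_congr _ (smkK _)) cats0 srepP //.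
Qed.
Definition SM : monoid := @Defs.Monoid scar smop sone smopA smop1l smop1r.

Lemma SM_eval (h : nat -> SM) w :
  proj1_sig (eval h w) = ctx (subst (fun l => srep (h l)) w).
Proof.
elim: w => [|l w IH] //=.
have e := srepP (eval h w); rewrite IH in e; rewrite (ctx_congr _ e) //.
Qed.

Lemma SM_sat (l r : word) :
  (forall s y z, F (y ++ subst s l ++ z) = F (y ++ subst s r ++ z)) ->
  msat SM (l, r).
Proof.
move=> H h; apply: scar_eq; rewrite /= !SM_eval.
apply: functional_extensionality => y; apply: functional_extensionality => z.
exact: H.
Qed.

Lemma SM_rec (u v : word) : msat SM (u, v) -> F u = F v.
Proof.
move=> H; have := H (fun l => smk [:: l]).
move/(f_equal (@proj1_sig _ _)); rewrite /= !SM_eval.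
have E w : ctx (subst (fun l => srep (smk [:: l])) w) = ctx w.
  elim: w => [|l w IH] //=.
  rewrite (ctx_congl _ (smkK _)) /=.
  by have := ctx_congr [:: l] IH.
rewrite !E => /(f_equal (fun g => g [::] [::])); rewrite /ctx /= !cats0; exact.
Qed.
End Synt.

Implicit Types (x k e c : nat) (w t : word) (ps : seq (nat * nat)).

Fixpoint ok3 (x k : nat) (w : word) : bool :=
  match w with
  | [::] => true
  | c :: w' => if c == x then (k < 2) && ok3 x k.+1 w' else ok3 x 0 w'
  end.

Definition good (n x : nat) (w : word) : bool :=
  [&& uniq (filter (predC1 x) w), count_mem x w <= 2 * n - 1 & ok3 x 0 w].

Lemma ok3_mono x w k k' : k' <= k -> ok3 x k w -> ok3 x k' w.
Proof.
elim: w k k' => //= c w IH k k' le; case: eqP => // _ /andP[lt h].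
rewrite (leq_ltn_trans le lt) /=; exact: (IH k.+1).
Qed.

Lemma ok3_catl x k a b : ok3 x k (a ++ b) -> ok3 x k a.
Proof.
elim: a k => //= c a IH k; case: eqP => _; last exact: IH.
by case/andP=> -> /IH.
Qed.

Lemma ok3_catr x k a b : ok3 x k (a ++ b) -> ok3 x 0 b.
Proof.
elim: a k => [|c a IH] k /=; first exact: ok3_mono.
case: eqP => _; last exact: IH.
by case/andP=> _ /IH.
Qed.

Lemma ok3_nseq x k e w : k <= 2 ->
  ok3 x k (nseq e x ++ w) = (k + e <= 2) && ok3 x (k + e) w.
Proof.
elim: e k => [|e IH] k le; first by rewrite addn0 le.
rewrite /= eqxx; case: (ltnP k 2) => lk /=.
  by rewrite IH // addSnnS.
by rewrite (_ : k + e.+1 <= 2 = false) //; lia.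
Qed.

Lemma ok3_free0 x t w : all (predC1 x) t -> ok3 x 0 (t ++ w) = ok3 x 0 w.
Proof.
elim: t => //= c t IH /andP[/negbTE -> h]; exact: IH.
Qed.

Lemma ok3_free x k t w : all (predC1 x) t -> t != [::] ->
  ok3 x k (t ++ w) = ok3 x 0 w.
Proof.
case: t => //= c t /andP[/negbTE -> h] _; exact: ok3_free0.
Qed.

Definition rig (x e0 : nat) (ps : seq (nat * nat)) : word :=
  nseq e0 x ++ flatten [seq p.1 :: nseq p.2 x | p <- ps].

Lemma ok3_rigf x k ps : all (predC1 x) (unzip1 ps) -> k <= 2 ->
  ok3 x k (flatten [seq p.1 :: nseq p.2 x | p <- ps]) = all (fun p => p.2 <= 2) ps.
Proof.
elim: ps k => //= [[c e] ps] IH k /andP[/negbTE hc hps] lk /=.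
rewrite hc ok3_nseq //= add0n; case: (leqP e 2) => le //=; exact: IH.
Qed.

Lemma ok3_rig x k e0 ps : all (predC1 x) (unzip1 ps) -> k <= 2 ->
  ok3 x k (rig x e0 ps) = (k + e0 <= 2) && all (fun p => p.2 <= 2) ps.
Proof.
move=> h lk; rewrite /rig ok3_nseq //; case: (leqP (k + e0) 2) => le //=.
exact: ok3_rigf.
Qed.

Lemma filter_nseq_x (x e : nat) : filter (predC1 x) (nseq e x) = [::].
Proof. by elim: e => //= e ->; rewrite eqxx. Qed.

Lemma filter_rig x e0 ps : all (predC1 x) (unzip1 ps) ->
  filter (predC1 x) (rig x e0 ps) = unzip1 ps.
Proof.
rewrite /rig filter_cat filter_nseq_x /=.
elim: ps => //= [[c e] ps] IH /andP[hc hps] /=; rewrite hc filter_cat filter_nseq_x.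
by rewrite /= IH.
Qed.

Lemma count_nseq_x (x e : nat) : count_mem x (nseq e x) = e.
Proof. by elim: e => //= e ->; rewrite eqxx. Qed.

Lemma count_rigf x ps : all (predC1 x) (unzip1 ps) ->
  count_mem x (flatten [seq p.1 :: nseq p.2 x | p <- ps]) = sumn (unzip2 ps).
Proof.
elim: ps => //= [[c e] ps] IH /andP[hc hps] /=.
rewrite (negbTE hc) count_cat count_nseq_x IH //.
Qed.

Lemma count_rig x e0 ps : all (predC1 x) (unzip1 ps) ->
  count_mem x (rig x e0 ps) = e0 + sumn (unzip2 ps).
Proof. by move=> h; rewrite /rig count_cat count_nseq_x count_rigf. Qed.

Lemma rig_dec x w : exists e0 ps, all (predC1 x) (unzip1 ps) /\ w = rig x e0 ps.
Proof.
elim: w => [|c w [e0 [ps [h ->]]]]; first by exists 0, [::].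
case: (eqVneq c x) => [->|hc].
  by exists e0.+1, ps.
by exists 0, ((c, e0) :: ps); split => //=; rewrite hc h.
Qed.

Lemma good_rigid n u : limited_cubefree_rigid (2 * n - 1) u ->
  exists x, good n x u.
Proof.
case=> x [ts [es [hu hs -> hsum hall]]]; exists x.
case: es hs hsum hall => // e0 es /= [hs] hsum /andP[he0 hall].
move: hu => /= /andP[hx hts].
have hz : unzip1 (zip ts es) = ts by rewrite unzip1_zip // hs.
have hz2 : unzip2 (zip ts es) = es by rewrite unzip2_zip // hs.
have hA : all (predC1 x) (unzip1 (zip ts es)).
  by rewrite hz all_predC has_pred1.
have -> : rigid_of x ts (e0 :: es) = rig x e0 (zip ts es) by [].
rewrite /good filter_rig // count_rig // ok3_rig // hz hz2 hts /= hsum /=.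
apply/andP; split; first lia.
rewrite -hz2 in hall.
elim: (zip ts es) hall => //= [[a b] l] IH /andP[h1 h2]; rewrite IH // andbT; lia.
Qed.

Lemma rigid_good n x v : good n x v -> limited_cubefree_rigid (2 * n - 1) v.
Proof.
case/and3P=> hu hc ho.
have [e0 [ps [hA ev]]] := rig_dec x v.
exists x, (unzip1 ps), (e0 :: unzip2 ps).
move: hu hc ho; rewrite ev filter_rig // count_rig // ok3_rig // => hu hc /andP[he hall].
split => //=.
- by rewrite hu andbT -has_pred1 -all_predC.
- by rewrite !size_map.
- by rewrite /rigid_of /= zip_unzip.
- apply/andP; split; first lia.
  elim: ps {ev hA hu hc} hall => //= [[a b] l] IH /andP[h1 h2]; rewrite IH // andbT; lia.
Qed.

Implicit Types (s : nat -> word).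

Lemma subst_cat s a b : subst s (a ++ b) = subst s a ++ subst s b.
Proof. by rewrite /subst map_cat flatten_cat. Qed.

Lemma count_subst (p : pred nat) s w : count p (subst s w) = sumn [seq count p (s l) | l <- w].
Proof. by rewrite /subst count_flatten -map_comp. Qed.

Lemma filter_subst (p : pred nat) s w :
  filter p (subst s w) = subst (fun l => filter p (s l)) w.
Proof. by rewrite /subst filter_flatten -map_comp. Qed.

Lemma subst_drop s w : s 0 = [::] -> subst s w = subst s (filter (predC1 0) w).
Proof.
move=> h; elim: w => //= l w IH; case: eqP => [->|_] /=.
  by rewrite /subst /= h /= -/(subst s w) IH.
by rewrite /subst /= -!/(subst s _) IH.
Qed.

Lemma subst_id s w : (forall l, l \in w -> s l = [:: l]) -> subst s w = w.
Proof.
elim: w => //= l w IH h; rewrite /subst /= -/(subst s w) h ?inE ?eqxx //= IH //.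
by move=> l' hl; apply: h; rewrite inE hl orbT.
Qed.

Lemma sumn_bound1 (f : nat -> nat) (a : nat) w : count_mem a w * f a <= sumn (map f w).
Proof.
elim: w => //= c w IH; case: eqP => [->|_] /=; nia.
Qed.

Lemma sumn_bound2 (f : nat -> nat) (a b : nat) w : b != a -> b \in w ->
  count_mem a w * f a + f b <= sumn (map f w).
Proof.
move=> hba; elim: w => //= c w IH; rewrite inE; case: (eqVneq b c) => [<- _|hbc /= hb].
  rewrite (negbTE hba) /= add0n; have := sumn_bound1 f a w; clear IH => h; rewrite addnC leq_add2l; exact: h.
have := IH hb; case: eqP => [->|_] /=; nia.
Qed.

Lemma sumn_split (f : nat -> nat) w :
  sumn (map f w) = count_mem 0 w * f 0 + sumn (map f (filter (predC1 0) w)).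
Proof.
elim: w => //= c w IH; case: (eqVneq c 0) => [->|h] /=; rewrite ?h /= IH; nia.
Qed.

Lemma split2 x t : (exists2 c, c \in t & c != x) \/ t = nseq (size t) x.
Proof.
case h: (all (pred1 x) t); first by right; apply/all_pred1P.
left; move/negbT: h; rewrite -has_predC => /hasP[c hc /= hn]; exists c => //.
Qed.

Lemma bad_rep n x c w : c != x -> 2 <= count_mem c w -> good n x w = false.
Proof.
move=> hc h2; apply/negbTE; apply/negP => /and3P[hu _ _].
have := count_uniq_mem c hu; rewrite count_filter.
rewrite (@eq_count _ _ (pred1 c)); last by move=> l /=; case: eqP => // ->; rewrite hc.
move=> e; move: h2; rewrite e; case: (c \in _) => //.
Qed.

Lemma bad_cnt n x w : 2 * n - 1 < count_mem x w -> good n x w = false.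
Proof.
move=> h; apply/negbTE; apply/negP => /and3P[_ hc _]; lia.
Qed.

Lemma bad_rep_ctx n x c s a l y z : c != x -> c \in s a -> 2 <= count_mem a l ->
  good n x (y ++ subst s l ++ z) = false.
Proof.
move=> hc hin h2; apply: (@bad_rep n x c _ hc).
rewrite !count_cat count_subst.
have := sumn_bound1 (fun l => count_mem c (s l)) a l.
have : 0 < count_mem c (s a) by rewrite -has_count has_pred1.
move=> h1 h3; have h : 2 <= count_mem a l * count_mem c (s a) by nia.
apply: leq_trans (leq_addl _ _); apply: leq_trans (leq_addr _ _).
exact: leq_trans h h3.
Qed.

Lemma bad_cnt_ctx n x s a l y z :
  2 * n - 1 < count_mem a l * count_mem x (s a) ->
  good n x (y ++ subst s l ++ z) = false.
Proof.
move=> h; apply: bad_cnt; rewrite !count_cat count_subst.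
have h3 := sumn_bound1 (fun l => count_mem x (s l)) a l.
apply: leq_trans (leq_addl _ _); apply: leq_trans (leq_addr _ _).
exact: leq_trans h h3.
Qed.

Lemma ok3_x3 x m y w : 0 < m ->
  ok3 x 0 (y ++ nseq m x ++ nseq m x ++ nseq m x ++ w) = false.
Proof.
move=> hm; apply/negbTE/negP => /ok3_catr.
rewrite ok3_nseq //= add0n; case: (leqP m 2) => // h1 /=.
rewrite ok3_nseq //; case: (leqP (m + m) 2) => // h2 /=.
rewrite ok3_nseq; last lia.
have -> : (m + m + m <= 2) = false by lia.
done.
Qed.

Definition outc n x (L R : word) :=
  L = R \/ (good n x L = false /\ good n x R = false).

Lemma bad_ok3 n x w : ok3 x 0 w = false -> good n x w = false.
Proof. by move=> h; rewrite /good h !andbF. Qed.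

Lemma nseqC x a b (W : word) : nseq a x ++ (nseq b x ++ W) = nseq b x ++ (nseq a x ++ W).
Proof. by rewrite !catA -!nseqD addnC. Qed.

Lemma O_case n x s y z l r : (l, r) \in O_ids ->
  outc n x (y ++ subst s l ++ z) (y ++ subst s r ++ z).
Proof.
rewrite !inE => /or3P[] /eqP [-> ->];
(case: (split2 x (s 0)) => [[c hc hcx]|h0];
  first by right; split; apply: (@bad_rep_ctx n x c s 0 _ y z hcx hc));
(case: (split2 x (s 1)) => [[c hc hcx]|h1];
  first by right; split; apply: (@bad_rep_ctx n x c s 1 _ y z hcx hc));
left; rewrite /subst /= h0 h1.
- by rewrite nseqC.
- by rewrite nseqC.
- by rewrite nseqC.
Qed.

Lemma count0_iota k : count_mem 0 (iota 1 k) = 0.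
Proof. apply/count_memPn; rewrite mem_iota; lia. Qed.

Lemma filter0_iota k : filter (predC1 0) (iota 1 k) = iota 1 k.
Proof. apply/all_filterP/allP => i; rewrite mem_iota /=; lia. Qed.

Lemma count_fl2 (sq : seq nat) : count_mem 0 (flatten [seq [:: i; 0] | i <- sq]) = size sq + count_mem 0 sq.
Proof. elim: sq => //= i sq ->; case: (i == 0) => /=; lia. Qed.

Lemma filter_fl2 (sq : seq nat) :
  filter (predC1 0) (flatten [seq [:: i; 0] | i <- sq]) = filter (predC1 0) sq.
Proof. by elim: sq => //= i sq ->; case: (i != 0). Qed.

Lemma E_case n x s y z l r : 2 <= n -> (l, r) \in Cn_extra_ids n ->
  outc n x (y ++ subst s l ++ z) (y ++ subst s r ++ z).
Proof.
move=> hn; rewrite !inE => /or3P[] /eqP [-> ->].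
- case: (split2 x (s 0)) => [[c hc hcx]|h0].
    by right; split; apply: (@bad_rep_ctx n x c s 0 _ y z hcx hc).
  case: (posnP (size (s 0))) => hm.
    by left; rewrite /subst /= h0 hm.
  right; rewrite /subst /= h0 -!catA; split; apply: bad_ok3; exact: ok3_x3.
- case: (split2 x (s 0)) => [[c hc hcx]|h0].
    by right; split; apply: (@bad_rep_ctx n x c s 0 _ y z hcx hc).
  case: (posnP (size (s 0))) => hm.
    by left; rewrite /subst /= h0 hm /= cats0.
  right; rewrite /subst /= h0 -!catA; split; apply: bad_ok3; first exact: ok3_x3.
  rewrite (catA y (s 1)); exact: ok3_x3.
- case: (split2 x (s 0)) => [[c hc hcx]|h0].
    right; split; apply: (@bad_rep_ctx n x c s 0 _ y z hcx hc).
      by rewrite count_cat count_nseq_x count0_iota; lia.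
    by rewrite count_fl2 size_iota count0_iota; lia.
  case: (posnP (size (s 0))) => hm.
    have e0 : s 0 = [::] by rewrite h0 hm.
    left; rewrite (@subst_drop s (nseq _ _ ++ _) e0) (@subst_drop s (flatten _) e0).
    by rewrite filter_fl2 filter_cat filter_nseq_x.
  right; split; apply: (@bad_cnt_ctx n x s 0); rewrite h0 count_nseq_x.
    rewrite count_cat count_nseq_x count0_iota; nia.
  rewrite count_fl2 size_iota count0_iota; nia.
Qed.

Lemma dexp_le j i : 0 < dexp j i <= 2.
Proof. by rewrite /dexp; case: eqP. Qed.

Lemma unzip1_pmap (f : nat -> nat) (l : seq nat) : unzip1 [seq (i, f i) | i <- l] = l.
Proof. by elim: l => //= i l ->. Qed.

Lemma unzip2_pmap (f : nat -> nat) (l : seq nat) : unzip2 [seq (i, f i) | i <- l] = map f l.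
Proof. by elim: l => //= i l ->. Qed.

Lemma d_rig n j : d n j = rig 0 (dexp j 0) [seq (i, dexp j i) | i <- iota 1 (n - 1)].
Proof. by rewrite /d /rig -map_comp. Qed.

Lemma all_iota1 k : all (predC1 0) (iota 1 k).
Proof. apply/allP => i; rewrite mem_iota /=; lia. Qed.

Lemma allA_d n j : all (predC1 0) (unzip1 [seq (i, dexp j i) | i <- iota 1 (n - 1)]).
Proof. by rewrite unzip1_pmap all_iota1. Qed.

Lemma sumn_dexp j (sq : seq nat) : sumn (map (dexp j) sq) + count_mem j sq = 2 * size sq.
Proof.
elim: sq => //= i sq IH.
have : dexp j i + (i == j) = 2 by rewrite /dexp; case: eqP.
lia.
Qed.

Lemma iota0n n : 0 < n -> iota 0 n = 0 :: iota 1 (n - 1).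
Proof. by case: n => // n _; rewrite subSS subn0. Qed.

Lemma count_d n j : 0 < n -> j < n -> count_mem 0 (d n j) = 2 * n - 1.
Proof.
move=> hn hj; rewrite d_rig count_rig ?allA_d // unzip2_pmap.
have := sumn_dexp j (iota 0 n); rewrite size_iota count_uniq_mem ?iota_uniq //.
rewrite mem_iota add0n hj /= iota0n //=; lia.
Qed.

Lemma filter_d n j : filter (predC1 0) (d n j) = iota 1 (n - 1).
Proof. by rewrite d_rig filter_rig ?allA_d // unzip1_pmap. Qed.

Lemma ok3_d n j : ok3 0 0 (d n j).
Proof.
rewrite d_rig ok3_rig ?allA_d // add0n; have := dexp_le j 0 => /andP[_ ->] /=.
apply/allP => p /mapP [i _ ->] /=; by have := dexp_le j i => /andP[].
Qed.

Lemma good_d n j : 0 < n -> j < n -> good n 0 (d n j).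
Proof.
move=> hn hj; rewrite /good filter_d iota_uniq count_d // leqnn ok3_d //.
Qed.

Lemma mem_d n j l : l \in d n j -> l = 0 \/ l \in iota 1 (n - 1).
Proof.
case: (eqVneq l 0) => [->|h]; first by left.
by move=> hl; right; rewrite -(filter_d n j) mem_filter /= h.
Qed.

Lemma path_d n j : 0 < n -> j < n ->
  path (fun a b => 3 <= a + b) (dexp j 0) (map (dexp j) (iota 1 (n - 1))).
Proof.
move=> hn hj.
have hc : count (pred1 1) (dexp j 0 :: map (dexp j) (iota 1 (n - 1))) <= 1.
  have -> : dexp j 0 :: map (dexp j) (iota 1 (n - 1)) = map (dexp j) (iota 0 n)
    by rewrite iota0n.
  rewrite count_map (@eq_count _ _ (pred1 j)); last first.
    by move=> i /=; rewrite /dexp; case: (i == j).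
  by rewrite count_uniq_mem ?iota_uniq //; case: (_ \in _).
have ha : all (fun e => 0 < e <= 2) (dexp j 0 :: map (dexp j) (iota 1 (n - 1))).
  by apply/allP => e /= /predU1P [->|/mapP [i _ ->]]; apply: dexp_le.
elim: (map (dexp j) (iota 1 (n - 1))) (dexp j 0) hc ha => //= e l IH k hc /and3P[hk he hl].
apply/andP; split.
  move: hc; case: eqP => [->|hk1]; case: eqP => [->|he1] //=; lia.
apply: IH; last by rewrite he.
move: hc; case: eqP => _ /=; lia.
Qed.

Lemma allC1 x t : all (predC1 x) t = (x \notin t).
Proof. by rewrite all_predC has_pred1. Qed.

Lemma subst_nseq0 s x e : s 0 = [:: x] -> subst s (nseq e 0) = nseq e x.
Proof. by move=> h; elim: e => //= e IH; rewrite /subst /= h -/(subst s _) IH. Qed.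

Lemma subst_rig0 s x e0 ps : s 0 = [:: x] ->
  subst s (rig 0 e0 ps) = nseq e0 x ++ flatten [seq s p.1 ++ nseq p.2 x | p <- ps].
Proof.
move=> h; rewrite /rig subst_cat (subst_nseq0 _ h); congr (_ ++ _).
elim: ps => //= p ps IH.
have -> : subst s (p.1 :: nseq p.2 0 ++ flatten [seq p0.1 :: nseq p0.2 0 | p0 <- ps])
  = s p.1 ++ subst s (nseq p.2 0 ++ flatten [seq p0.1 :: nseq p0.2 0 | p0 <- ps]) by [].
by rewrite subst_cat IH (subst_nseq0 _ h) -catA.
Qed.

Lemma ok3_bad_path x s k ps : k <= 2 -> all (fun p => x \notin s p.1) ps ->
  has (fun p => s p.1 == [::]) ps -> all (fun p => p.2 <= 2) ps ->
  path (fun a b => 3 <= a + b) k (unzip2 ps) ->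
  ok3 x k (flatten [seq s p.1 ++ nseq p.2 x | p <- ps]) = false.
Proof.
elim: ps k => //= [[c e]] ps IH k hk /andP[hx hA] /orP[he|hh] /andP[he2 hB] /andP[h3 hP] /=.
  rewrite (eqP he) /= ok3_nseq //; have -> : (k + e <= 2) = false by move: h3 => /=; lia.
  done.
case: (eqVneq (s c) [::]) => [e0|ne].
  rewrite e0 /= ok3_nseq //; have -> : (k + e <= 2) = false by move: h3 => /=; lia.
  done.
rewrite -catA ok3_free ?allC1 // ok3_nseq //= he2 /=; exact: IH.
Qed.

Lemma ok3_xfree x k z : x \notin z -> ok3 x k z.
Proof.
elim: z k => //= c z IH k; rewrite inE negb_or eq_sym => /andP[/negbTE -> h]; exact: IH.
Qed.

Lemma ok3_good_path x s k ps z : k <= 2 ->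
  all (fun p => (x \notin s p.1) && (s p.1 != [::])) ps ->
  all (fun p => p.2 <= 2) ps -> x \notin z ->
  ok3 x k (flatten [seq s p.1 ++ nseq p.2 x | p <- ps] ++ z).
Proof.
elim: ps k => [|[c e] ps IH] k hk /=; first by move=> _ _; apply: ok3_xfree.
case/andP=> /andP[hx hne] hA /andP[he hB] hz.
rewrite -!catA ok3_free ?allC1 // ok3_nseq //= he /=; exact: IH.
Qed.

Definition pi_ok n x s (y z : word) :=
  [&& s 0 == [:: x], all (fun i => (x \notin s i) && (s i != [::])) (iota 1 (n - 1)),
      x \notin y & x \notin z].

Lemma pi_bad n x s y z j : 2 <= n -> j < n -> ~~ pi_ok n x s y z -> s 0 != [::] ->
  good n x (y ++ subst s (d n j) ++ z) = false.
Proof.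
move=> hn hj hok hne.
have hcd := count_d (leq_trans (isT : 0 < 2) hn) hj.
case: (split2 x (s 0)) => [[c hc hcx]|h0].
  apply: (@bad_rep_ctx n x c s 0 _ y z hcx hc); rewrite hcd; lia.
case: (ltngtP (size (s 0)) 1) => hm.
- by move: hne; rewrite h0; have -> : size (s 0) = 0 by lia.
- apply: (@bad_cnt_ctx n x s 0); rewrite hcd h0 count_nseq_x; nia.
have e0 : s 0 = [:: x] by rewrite h0 hm.
have lb : 2 * n - 1 <= count_mem x (subst s (d n j)).
  rewrite count_subst; have := sumn_bound1 (fun l => count_mem x (s l)) 0 (d n j).
  by rewrite hcd e0 /= eqxx muln1.
case hA1: (all (fun i => x \notin s i) (iota 1 (n - 1))); last first.
  move/negbT: hA1 => /allPn [i hi /negPn hxi].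
  apply: bad_cnt; rewrite !count_cat count_subst.
  have hid : i \in d n j by rewrite -(filter_d n j) in hi; move: hi; rewrite mem_filter => /andP[].
  have hi0 : i != 0 by move: hi; rewrite mem_iota; case: i {hxi hid}.
  have := sumn_bound2 (fun l => count_mem x (s l)) hi0 hid.
  rewrite hcd e0 /= eqxx muln1.
  have : 0 < count_mem x (s i) by rewrite -has_count has_pred1.
  set S := sumn _; set C := count_mem x (s i); set Y := count_mem x y; set Z := count_mem x z. lia.
case hy: (x \in y).
  apply: bad_cnt; rewrite !count_cat.
  have : 0 < count_mem x y by rewrite -has_count has_pred1.
  lia.
case hz: (x \in z).
  apply: bad_cnt; rewrite !count_cat.
  have : 0 < count_mem x z by rewrite -has_count has_pred1.
  lia.
have hA2 : ~~ all (fun i => s i != [::]) (iota 1 (n - 1)).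
  apply/negP => hA2; move/negP: hok; apply; rewrite /pi_ok e0 eqxx hy hz /= andbT.
  by apply/allP => i hi; rewrite (allP hA1 i hi) (allP hA2 i hi).
move: hA2 => /allPn [i hi /negPn /eqP hsi].
apply: bad_ok3; apply/negbTE/negP => /ok3_catr.
rewrite d_rig (subst_rig0 _ _ e0) -catA ok3_nseq // add0n.
case/andP=> _ /ok3_catl.
rewrite ok3_bad_path //.
- by have := dexp_le j 0 => /andP[].
- by rewrite all_map; apply: sub_all hA1 => l.
- by rewrite has_map; apply/hasP; exists i => //=; rewrite hsi.
- by rewrite all_map; apply/allP => l _ /=; have := dexp_le j l => /andP[].
- by rewrite unzip2_pmap; apply: path_d => //; lia.
Qed.

Lemma pi_eq0 n s j k : s 0 = [::] -> subst s (d n j) = subst s (d n k).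
Proof. by move=> h; rewrite (@subst_drop s (d n j) h) (@subst_drop s (d n k) h) !filter_d. Qed.

Lemma good_pi_form n x s y z j : 2 <= n -> j < n -> pi_ok n x s y z ->
  good n x (y ++ subst s (d n j) ++ z) =
  uniq (filter (predC1 x) y ++ subst (fun l => filter (predC1 x) (s l)) (iota 1 (n - 1))
        ++ filter (predC1 x) z) &&
  (count_mem x y + ((2 * n - 1) * count_mem x (s 0) +
     sumn [seq count_mem x (s l) | l <- iota 1 (n - 1)]) + count_mem x z <= 2 * n - 1).
Proof.
move=> hn hj /and4P[/eqP e0 hA hy hz].
have hn0 : 0 < n by lia.
have hfs0 : (fun l => filter (predC1 x) (s l)) 0 = [::] by rewrite /= e0 /= eqxx.
rewrite /good !filter_cat filter_subst (subst_drop _ hfs0) filter_d.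
rewrite !count_cat count_subst sumn_split count_d // filter_d addnA.
have -> : ok3 x 0 (y ++ subst s (d n j) ++ z).
  rewrite ok3_free0 ?allC1 // d_rig (subst_rig0 _ _ e0) -catA ok3_nseq // add0n.
  have := dexp_le j 0 => /andP[_ ->] /=.
  apply: ok3_good_path => //.
  - by have := dexp_le j 0 => /andP[].
  - by rewrite all_map.
  - by rewrite all_map; apply/allP => l _ /=; have := dexp_le j l => /andP[].
by rewrite andbT.
Qed.

Lemma pi_case n x s y z j k : 2 <= n -> j < n -> k < n ->
  outc n x (y ++ subst s (d n j) ++ z) (y ++ subst s (d n k) ++ z) \/ pi_ok n x s y z.
Proof.
move=> hn hj hk; case: (eqVneq (s 0) [::]) => [h0|hne].
  by left; left; rewrite (pi_eq0 n j k h0).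
case hok: (pi_ok n x s y z); first by right.
left; right; split; apply: pi_bad => //; by rewrite hok.
Qed.

Lemma pi_good n x s y z j k : 2 <= n -> j < n -> k < n -> pi_ok n x s y z ->
  good n x (y ++ subst s (d n j) ++ z) = good n x (y ++ subst s (d n k) ++ z).
Proof. by move=> hn hj hk h; rewrite !good_pi_form. Qed.

Definition hd0 (t : word) := if t is c :: _ then c != 0 else true.

Lemma nseq_inj a b t t' : hd0 t -> hd0 t' -> nseq a 0 ++ t = nseq b 0 ++ t' ->
  a = b /\ t = t'.
Proof.
elim: a b => [|a IH] [|b] /=.
- by move=> _ _ ->.
- by move=> h1 _ ht; rewrite ht in h1.
- by move=> _ h2 ht; rewrite -ht in h2.
- by move=> h1 h2 [] /(IH b h1 h2) [-> ->].
Qed.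

Definition flt (ps : seq (nat * nat)) : word := flatten [seq p.1 :: nseq p.2 0 | p <- ps].

Lemma hd0_flt ps : all (predC1 0) (unzip1 ps) -> hd0 (flt ps).
Proof. by case: ps => //= [[c e] ps] /andP[]. Qed.

Lemma flt_inj ps qs : all (predC1 0) (unzip1 ps) -> all (predC1 0) (unzip1 qs) ->
  flt ps = flt qs -> ps = qs.
Proof.
elim: ps qs => [|[c e] ps IH] [|[c' e'] qs] //= hp hq.
case=> -> h; move: hp hq => /andP[_ hp] /andP[_ hq].
have [-> h'] := nseq_inj (hd0_flt hp) (hd0_flt hq) h.
by rewrite (IH qs hp hq h').
Qed.

Lemma rig_inj a b ps qs : all (predC1 0) (unzip1 ps) -> all (predC1 0) (unzip1 qs) ->
  rig 0 a ps = rig 0 b qs -> a = b /\ ps = qs.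
Proof.
move=> hp hq h; have [-> h'] := nseq_inj (hd0_flt hp) (hd0_flt hq) h.
by rewrite (flt_inj hp hq h').
Qed.

Lemma map_pair_eq (c f g : nat -> nat) (l : seq nat) :
  [seq (c i, f i) | i <- l] = [seq (i, g i) | i <- l] ->
  forall i, i \in l -> c i = i /\ f i = g i.
Proof.
elim: l => //= a l IH [] h1 h2 h3 i; rewrite inE => /predU1P [->|hi]; first by [].
exact: IH.
Qed.

Lemma sumn_size (f : nat -> nat) (l : seq nat) : (forall i, i \in l -> 0 < f i) ->
  size l <= sumn (map f l) /\ (sumn (map f l) <= size l -> forall i, i \in l -> f i = 1).
Proof.
elim: l => //= a l IH h.
have ha := h a (mem_head _ _).
have [h1 h2] := IH (fun i hi => h i (@mem_behead _ (a :: l) _ hi)).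
split; first lia.
move=> hle i; rewrite inE => /predU1P [->|hi]; first lia.
apply: h2 => //; lia.
Qed.

Lemma pi_cls n s y z j k m : 2 <= n -> j < n -> k < n -> m < n -> pi_ok n 0 s y z ->
  y ++ subst s (d n j) ++ z = d n m -> m = j /\ y ++ subst s (d n k) ++ z = d n k.
Proof.
move=> hn hj hk hm /and4P[/eqP e0 hA hy hz] hL.
have hn0 : 0 < n by lia.
have hA' i : i \in iota 1 (n - 1) -> (0 \notin s i) && (s i != [::]) by move/(allP hA).
have hcnt := f_equal (count (predC1 0)) hL.
have cm : count (predC1 0) (d n m) = n - 1 by rewrite -size_filter filter_d size_iota.
rewrite cm !count_cat count_subst sumn_split e0 /= muln0 add0n filter_d in hcnt.
have ey : count (predC1 0) y = size y by apply/eqP; rewrite -all_count allC1.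
have ez : count (predC1 0) z = size z by apply/eqP; rewrite -all_count allC1.
have es : [seq count (predC1 0) (s l) | l <- iota 1 (n - 1)] = [seq size (s l) | l <- iota 1 (n - 1)].
  apply/eq_in_map => i /hA' /andP[h _]; apply/eqP; rewrite -all_count allC1 //.
rewrite ey ez es in hcnt.
have hpos : forall i, i \in iota 1 (n - 1) -> 0 < size (s i).
  by move=> i hi; case/andP: (hA' i hi) => _; case: (s i).
have [h1 h2] := @sumn_size (fun l => size (s l)) (iota 1 (n - 1)) hpos.
rewrite size_iota in h1 h2.
have hy0 : y = [::] by apply/size0nil; lia.
have hz0 : z = [::] by apply/size0nil; lia.
have h1s : forall i, i \in iota 1 (n - 1) -> s i = [:: head 0 (s i)].
  move=> i hi; have := h2 ltac:(lia) i hi; case: (s i) => [|a [|b t]] //.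
subst y z; rewrite /= cats0 in hL *.
have hc0 : forall i, i \in iota 1 (n - 1) -> head 0 (s i) != 0.
  move=> i hi; case/andP: (hA' i hi) => h _; move: h; rewrite (h1s i hi) inE eq_sym //.
have hsj : subst s (d n j) = rig 0 (dexp j 0) [seq (head 0 (s i), dexp j i) | i <- iota 1 (n - 1)].
  rewrite d_rig (subst_rig0 _ _ e0) /rig; congr (_ ++ _); rewrite -!map_comp.
  by congr flatten; apply/eq_in_map => i hi /=; rewrite {1}(h1s i hi).
rewrite hsj d_rig in hL.
have hp : all (predC1 0) (unzip1 [seq (head 0 (s i), dexp j i) | i <- iota 1 (n - 1)]).
  by rewrite /unzip1 -map_comp; apply/allP => c /mapP [i hi ->]; exact: hc0.
have [hd0e hpe] := rig_inj hp (allA_d n m) hL.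
have hpe' := map_pair_eq hpe.
have emj : m = j.
  case: (eqVneq m j) => // hmj.
  case: (posnP j) => hj0.
    move: hd0e; rewrite /dexp hj0 eqxx; case: (0 =P m) => [hm0 _|_ //].
    by rewrite -hm0 hj0 eqxx in hmj.
  have hji : j \in iota 1 (n - 1) by rewrite mem_iota; lia.
  have [_ hdj] := hpe' j hji; move: hdj; rewrite /dexp eqxx.
  by case: (j =P m) => // hjm; rewrite hjm eqxx in hmj.
split=> //; rewrite cats0.
apply: subst_id => l /mem_d [->|hl]; first by [].
by rewrite (h1s l hl); have [-> _] := hpe' l hl.
Qed.

Definition Cls n (pi : word -> word -> Prop) j0 (w : word) : Prop :=
  exists k, [/\ k < n, pi (d n j0) (d n k) & w = d n k].

Lemma pi_pair n pi l r : equiv_on_Dn n pi -> pi l r ->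
  exists j k, [/\ j < n, k < n, l = d n j & r = d n k].
Proof.
case=> hD _ _ _ h; have [[j hj ->] [k hk ->]] := hD _ _ h; by exists j, k.
Qed.

Lemma sat_good n pi x : 2 <= n -> equiv_on_Dn n pi ->
  msat_all (SM (good n x)) (Cn_pi_ids n pi).
Proof.
move=> hn heq [l r] [hO|[hE|hpi]]; apply: SM_sat => s y z.
- by case: (O_case n x s y z hO) => [->|[-> ->]].
- by case: (E_case x s y z hn hE) => [->|[-> ->]].
have [j [k [hj hk /= -> ->]]] := pi_pair heq hpi.
case: (pi_case x s y z hn hj hk) => [[->|[-> ->]]|hok] //.
exact: pi_good.
Qed.

Lemma Cls_good n pi j0 w : 2 <= n -> Cls n pi j0 w -> good n 0 w.
Proof. move=> hn [k [hk _ ->]]; apply: good_d => //; lia. Qed.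

Lemma outc_F n pi j0 L R : 2 <= n -> outc n 0 L R ->
  (good n 0 L, Cls n pi j0 L) = (good n 0 R, Cls n pi j0 R).
Proof.
move=> hn [->|[hL hR]] //; rewrite hL hR; congr pair.
apply: propositional_extensionality; split.
  by move/(Cls_good hn); rewrite hL.
by move/(Cls_good hn); rewrite hR.
Qed.

Lemma sat_cls n pi j0 : 2 <= n -> equiv_on_Dn n pi -> j0 < n ->
  msat_all (SM (fun w => (good n 0 w, Cls n pi j0 w))) (Cn_pi_ids n pi).
Proof.
move=> hn heq hj0 [l r] [hO|[hE|hpi]]; apply: SM_sat => s y z.
- exact: outc_F (O_case n 0 s y z hO).
- exact: outc_F (E_case 0 s y z hn hE).
have [j [k [hj hk /= el er]]] := pi_pair heq hpi.
case: heq => _ hrefl hsym htrans.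
move: hpi; rewrite el er /= => hpi.
case: (pi_case 0 s y z hn hj hk) => [ho|hok]; first exact: outc_F.
congr pair; first exact: pi_good.
apply: propositional_extensionality; split.
- case=> m [hm hpm hL].
  have [emj ->] := pi_cls hn hj hk hm hok hL.
  exists k; split => //; apply: (htrans _ _ _ hpm); rewrite emj //.
- case=> m [hm hpm hR].
  have hok' : pi_ok n 0 s y z := hok.
  have [emk ->] := pi_cls hn hk hj hm hok' hR.
  exists j; split => //; apply: (htrans _ _ _ hpm); rewrite emk; exact: hsym.
Qed.

Theorem lemma4p3 (n : nat) (pi : word -> word -> Prop) (u v : word) :
  2 <= n -> equiv_on_Dn n pi ->
  variety_sat (Cn_pi_ids n pi) (u, v) ->
  (limited_cubefree_rigid (2 * n - 1) u -> limited_cubefree_rigid (2 * n - 1) v) /\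
  (in_Dn n u -> in_Dn n v /\ pi u v).
Proof.
move=> hn heq hsat; split.
  move=> hu; have [x hgu] := good_rigid hu.
  have e := SM_rec (hsat _ (@sat_good n pi x hn heq)).
  by apply: (@rigid_good n x); rewrite -e.
case=> j0 hj0 hu.
have e := SM_rec (hsat _ (@sat_cls n pi j0 hn heq hj0)).
have hc : Cls n pi j0 u.
  exists j0; split => //; rewrite -hu.
  by case: heq => _ hrefl _ _; apply: hrefl; exists j0.
have := f_equal snd e; rewrite /= => ec; rewrite ec in hc.
case: hc => k [hk hpk ->]; split; first by exists k.
by rewrite hu.
Qed.
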